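(* Let $\mathbf{z}\in\mathrm{GF}(2)^{2\times 30}$ be arbitrary and define binary $6\times 30$ matrices $\mathbf{Z_1},\mathbf{Z_2},\mathbf{Z_3}$ by: rows 1–2 of $\mathbf{Z_1}$ equal $\mathbf{z}$; rows 3–4 of $\mathbf{Z_1}$ equal $f(\text{rows }1\text{–}2 \text{ of } \mathbf{Z_1})$; rows 5–6 of $\mathbf{Z_1}$ equal $f(\text{rows }3\text{–}4\text{ of }\mathbf{Z_1})$; $\mathbf{Z_2}=g(\mathbf{Z_1})$; $\mathbf{Z_3}=g(\mathbf{Z_2})$. Let $\mathbf{W_1},\mathbf{W_2},\mathbf{W_3}$ be the $10\times 30$ matrices selecting the coordinates of files $A$, $B$, $C$ respectively (i.e., $\mathbf{W_1}=[I_{10}\ 0\ 0]$, $\mathbf{W_2}=[0\ I_{10}\ 0]$, $\mathbf{W_3}=[0\ 0\ I_{10}]$). For $S,T\subseteq\{1,2,3\}$ let $\mathbf{M}(S,T)$ be the matrix obtained by stacking $\mathbf{W_j}$ for $j\in S$ and $\mathbf{Z_i}$ for $i\in T$. Then for any $S,S',T,T'\subseteq\{1,2,3\}$ with $|S|=|S'|$ and $|T|=|T'|$, we have $\operatorname{rank}\mathbf{M}(S,T)=\operatorname{rank}\mathbf{M}(S',T')$ over $\mathrm{GF}(2)$; equivalently, the joint entropies $H(\{W_j\}_{j\in S},\{Z_i\}_{i\in T})$ and $H(\{W_j\}_{j\in S'},\{Z_i\}_{i\in T'})$ are equal.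
   Context: Three files $A=W_1$, $B=W_2$, $C=W_3$ are each split into 10 subfiles $A_1,\dots,A_{10}$, $B_1,\dots,B_{10}$, $C_1,\dots,C_{10}$, all i.i.d. uniform bit strings of equal length; the information vector is $\mathbf{W}=[A_1,\dots,A_{10},B_1,\dots,B_{10},C_1,\dots,C_{10}]$, so coordinates $1$–$10$, $11$–$20$, $21$–$30$ correspond to $A$, $B$, $C$. A binary matrix $\mathbf{G}$ with 30 columns represents the linear code $\mathbf{G}\mathbf{W}^{T}$, and cache $Z_i$ is $\mathbf{Z_i}\mathbf{W}^T$, file $W_j$ is $\mathbf{W_j}\mathbf{W}^T$; the entropy of a collection of such variables equals the rank of the stacked generator matrices times the subfile size. Column operations on matrices with 30 columns (applied to each row): $f$ moves the coefficient of $A_i$ to the position of $B_i$, that of $B_i$ to $C_i$, that of $C_i$ to $A_i$ (for all $i=1,\dots,10$), i.e., it relabels files $A\mapsto B\mapsto C\mapsto A$; $g$ moves, within each file, the coefficient of subfile $i$ to subfile $i+3$ reduced into $\{1,\dots,9\}$ modulo 9 (so $1\mapsto4,\dots,6\mapsto 9, 7\mapsto1, 8\mapsto 2, 9\mapsto 3$) for $1\le i\le 9$, and fixes subfile $10$. For example, $f\circ g$ sends the row representing $A_2\oplus B_3\oplus C_9\oplus C_{10}$ to the row representing $B_5\oplus C_6\oplus A_3\oplus A_{10}$. *)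

(* Defs.v *)
From HB Require Import structures.
From mathcomp Require Import all_boot all_order all_algebra.
Set Implicit Arguments. Unset Strict Implicit. Unset Printing Implicit Defensive.
Import GRing.Theory.
Local Open Scope ring_scope.

(* Columns are 0-indexed: column k (0<=k<30) is subfile (k %% 10)+1 of file
   (k %/ 10) (0 = A, 1 = B, 2 = C).  The scalar field GF(2) is 'F_2. *)

(* f moves the coefficient in column k to column (k+10) mod 30, i.e. the new
   column k receives the old column (k+20) mod 30. *)
Definition f_src (k : 'I_30) : 'I_30 := inord ((k + 20) %% 30).

(* g moves, within each file, subfile p (0-indexed, p<9) to (p+3) mod 9 and
   fixes p = 9; the new position p receives the old position (p+6) mod 9. *)
Definition g_src (k : 'I_30) : 'I_30 :=
  let b := (k %/ 10)%N in let p := (k %% 10)%N in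
  inord (b * 10 + (if p == 9%N then 9 else (p + 6) %% 9))%N.

Definition fmx m (M : 'M['F_2]_(m, 30)) : 'M['F_2]_(m, 30) :=
  \matrix_(i, k) M i (f_src k).
Definition gmx m (M : 'M['F_2]_(m, 30)) : 'M['F_2]_(m, 30) :=
  \matrix_(i, k) M i (g_src k).

Definition Z1 (z : 'M['F_2]_(2, 30)) : 'M['F_2]_(2 + (2 + 2), 30) :=
  col_mx z (col_mx (fmx z) (fmx (fmx z))).
Definition Zmx (z : 'M['F_2]_(2, 30)) (i : 'I_3) : 'M['F_2]_(2 + (2 + 2), 30) :=
  iter i (@gmx _) (Z1 z).

Definition Wmx (j : 'I_3) : 'M['F_2]_(10, 30) :=
  \matrix_(i < 10, k < 30) ((k : nat) == j * 10 + i)%N%:R.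

(* Row space of the stack of W_j (j in S) and Z_i (i in T); its rank is the
   rank of the stacked matrix M(S,T). *)
Definition Mst (z : 'M['F_2]_(2, 30)) (S T : {set 'I_3}) :=
  ((\sum_(j in S) <<Wmx j>>) + (\sum_(i in T) <<Zmx z i>>))%MS.

(* Main.v *)
Require Import Defs.
From mathcomp Require Import all_boot all_order all_algebra.
Set Implicit Arguments. Unset Strict Implicit. Unset Printing Implicit Defensive.
Import GRing.Theory.
Local Open Scope ring_scope.

Definition fv (k : nat) := ((k + 20) %% 30)%N.
Definition gv (k : nat) := (k %/ 10 * 10 + (if k %% 10 == 9 then 9 else (k %% 10 + 6) %% 9))%N.
Definition tv (i : nat) := (if i == 9 then 9 else (i + 3) %% 9)%N.

Lemma allI (P : nat -> bool) n : all P (iota 0 n) -> forall k : 'I_n, P k.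
Proof. move=> /allP H k; apply: H; by rewrite mem_iota ltn_ord. Qed.

Lemma c1 : all (fun k => (fv k < 30) && (gv k < 30) && (fv (fv (fv k)) == k) && (gv (gv (gv k)) == k) && (gv (fv k) == fv (gv k)))%N (iota 0 30).
Proof. by []. Qed.
Lemma c4 : all (fun k => all (fun j => all (fun i => (fv k == j*10+i) == (k == ((j.+1) %% 3)*10 + i)) (iota 0 10)) (iota 0 3))%N (iota 0 30).
Proof. by []. Qed.
Lemma c5 : all (fun k => all (fun j => all (fun i => (gv k == j*10+i) == (k == j*10 + tv i)) (iota 0 10)) (iota 0 3))%N (iota 0 30).
Proof. by []. Qed.
Lemma c6 : all (fun i => (tv i < 10) && (tv (tv (tv i)) == i))%N (iota 0 10).
Proof. by []. Qed.

Lemma f_srcE k : val (f_src k) = fv k.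
Proof. rewrite /f_src /= inordK //; have := allI c1 k; by case/andP=> /andP[/andP[/andP[]]]. Qed.
Lemma g_srcE k : val (g_src k) = gv k.
Proof. rewrite /g_src /= inordK //; have := allI c1 k; by case/andP=> /andP[/andP[/andP[]]]. Qed.

Lemma f3 k : f_src (f_src (f_src k)) = k.
Proof. apply: val_inj; rewrite !f_srcE; have := allI c1 k; by case/andP=> /andP[/andP[/andP[_ _] /eqP]]. Qed.
Lemma g3 k : g_src (g_src (g_src k)) = k.
Proof. apply: val_inj; rewrite !g_srcE; have := allI c1 k; by case/andP=> /andP[_ /eqP]. Qed.
Lemma fg k : g_src (f_src k) = f_src (g_src k).
Proof. apply: val_inj; rewrite !(g_srcE, f_srcE); have := allI c1 k; by case/andP=> _ /eqP. Qed.

Definition tau (i : 'I_10) : 'I_10 := inord (tv i).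
Lemma tauE i : val (tau i) = tv i.
Proof. rewrite /tau /= inordK //; by have /andP[] := allI c6 i. Qed.
Lemma tau3 i : tau (tau (tau i)) = i.
Proof. apply: val_inj; rewrite !tauE; by have /andP[_ /eqP] := allI c6 i. Qed.

Definition cperm n (h : 'I_n -> 'I_n) : 'M['F_2]_n := \matrix_(i, k) (i == h k)%:R.
Lemma colE m n (M : 'M['F_2]_(m, n)) h : \matrix_(i, k) M i (h k) = M *m cperm h.
Proof.
apply/matrixP=> i k; rewrite !mxE (bigD1 (h k)) //= big1 ?addr0 ?mxE ?eqxx ?mulr1 //.
by move=> j /negbTE; rewrite mxE => ->; rewrite mulr0.
Qed.
Lemma rowE m n (M : 'M['F_2]_(m, n)) h : \matrix_(i, k) M (h i) k = (cperm h)^T *m M.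
Proof.
apply/matrixP=> i k; rewrite !mxE (bigD1 (h i)) //= big1 ?addr0 ?mxE ?eqxx ?mul1r //.
by move=> j hj; rewrite !mxE (negbTE hj) mul0r.
Qed.

Definition Pf := cperm f_src.
Definition Pg := cperm g_src.
Lemma fmxE m (M : 'M['F_2]_(m, 30)) : fmx M = M *m Pf.
Proof. exact: colE. Qed.
Lemma gmxE m (M : 'M['F_2]_(m, 30)) : gmx M = M *m Pg.
Proof. exact: colE. Qed.
Lemma fmx3 m (M : 'M['F_2]_(m, 30)) : fmx (fmx (fmx M)) = M.
Proof. by apply/matrixP=> i k; rewrite !mxE f3. Qed.
Lemma gmx3 m (M : 'M['F_2]_(m, 30)) : gmx (gmx (gmx M)) = M.
Proof. by apply/matrixP=> i k; rewrite !mxE g3. Qed.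
Lemma fgC m (M : 'M['F_2]_(m, 30)) : fmx (gmx M) = gmx (fmx M).
Proof. by apply/matrixP=> i k; rewrite !mxE fg. Qed.

Lemma rankf m (M : 'M['F_2]_(m, 30)) : \rank (fmx M) = \rank M.
Proof.
apply/eqP; rewrite eqn_leq {1}fmxE mxrankM_maxl /=.
rewrite -{1}(fmx3 M) {1}fmxE; apply: leq_trans (mxrankM_maxl _ _) _.
by rewrite {1}fmxE mxrankM_maxl.
Qed.
Lemma rankg m (M : 'M['F_2]_(m, 30)) : \rank (gmx M) = \rank M.
Proof.
apply/eqP; rewrite eqn_leq {1}gmxE mxrankM_maxl /=.
rewrite -{1}(gmx3 M) {1}gmxE; apply: leq_trans (mxrankM_maxl _ _) _.
by rewrite {1}gmxE mxrankM_maxl.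
Qed.

Lemma fW j : fmx (Wmx j) = Wmx (ordS j).
Proof.
apply/matrixP=> i k; rewrite !mxE f_srcE.
by move/allI: (allI c4 k) => /(_ j) /allI /(_ i) /eqP ->.
Qed.

Definition rp (M : 'M['F_2]_(10, 30)) := \matrix_(i, k) M (tau i) k.

Lemma gW j : gmx (Wmx j) = rp (Wmx j).
Proof.
apply/matrixP=> i k; rewrite !mxE g_srcE tauE.
by move/allI: (allI c5 k) => /(_ j) /allI /(_ i) /eqP ->.
Qed.

Lemma gWeq j : (gmx (Wmx j) :=: Wmx j)%MS.
Proof.
apply/eqmxP/andP; split; first by rewrite gW /rp rowE submxMl.
have E : Wmx j = rp (rp (rp (Wmx j))) by apply/matrixP=> i k; rewrite !mxE tau3.
rewrite {1}E -gW {1}/rp rowE; apply: submx_trans (submxMl _ _) _.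
by rewrite /rp rowE submxMl.
Qed.

Lemma colsum m1 m2 m3 (a : 'M['F_2]_(m1, 30)) (b : 'M['F_2]_(m2, 30)) (c : 'M['F_2]_(m3, 30)) :
  (col_mx a (col_mx b c) :=: a + (b + c))%MS.
Proof.
apply: eqmx_sym; apply: eqmx_trans (adds_eqmx (eqmx_refl a) (addsmxE b c)) _.
exact: addsmxE.
Qed.

Lemma fZ1 z : (fmx (Z1 z) :=: Z1 z)%MS.
Proof.
have -> : fmx (Z1 z) = col_mx (fmx z) (col_mx (fmx (fmx z)) z).
  by rewrite /Z1 !fmxE !mul_col_mx -!fmxE fmx3.
apply: eqmx_trans (colsum _ _ _) _.
rewrite addsmxA (addsmxC _ z); exact: eqmx_sym (colsum _ _ _).
Qed.

Lemma fiter n m (M : 'M['F_2]_(m, 30)) : fmx (iter n (@gmx _) M) = iter n (@gmx _) (fmx M).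
Proof. by elim: n => //= n IH; rewrite fgC IH. Qed.

Lemma giter_eq n m (A B : 'M['F_2]_(m, 30)) : (A :=: B)%MS -> (iter n (@gmx _) A :=: iter n (@gmx _) B)%MS.
Proof. move=> AB; elim: n => //= n IH; rewrite !gmxE; exact: eqmxMr. Qed.

Lemma fZ z i : (fmx (Zmx z i) :=: Zmx z i)%MS.
Proof. rewrite /Zmx fiter; apply: giter_eq; exact: fZ1. Qed.

Lemma gZ z i : gmx (Zmx z i) = Zmx z (ordS i).
Proof.
case: i => [[|[|[|n]]] hi] //; rewrite /Zmx /=.
by rewrite gmx3.
Qed.

Definition shS (S : {set 'I_3}) := [set x | ord_pred x \in S].

Lemma reW (S : {set 'I_3}) (F : 'I_3 -> 'M['F_2]_30) :
  (\sum_(j in S) F (ordS j))%MS = (\sum_(j in shS S) F j)%MS.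
Proof.
rewrite [RHS](reindex (@ordS 3)) /=; last by apply: onW_bij; exists (@ord_pred 3); [exact: ordSK | exact: ord_predK].
by apply: eq_bigl => j; rewrite inE ordSK.
Qed.

Lemma fstep z S T : \rank (Mst z S T) = \rank (Mst z (shS S) T).
Proof.
rewrite -rankf fmxE.
have E : (Mst z S T *m Pf :=: (\sum_(j in S) <<Wmx (ordS j)>> + \sum_(i in T) <<Zmx z i>>))%MS.
  apply: eqmx_trans (addsmxMr _ _ _) _; apply: adds_eqmx.
    apply: eqmx_trans (sumsmxMr _ _ _) _; apply: eqmx_sums => j _.
    apply: eqmx_trans (eqmxMr _ (genmxE _)) _; rewrite -fmxE fW; exact: eqmx_sym (genmxE _).
  apply: eqmx_trans (sumsmxMr _ _ _) _; apply: eqmx_sums => j _.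
  apply: eqmx_trans (eqmxMr _ (genmxE _)) _; rewrite -fmxE.
  apply: eqmx_trans (fZ _ _) _; exact: eqmx_sym (genmxE _).
by rewrite E (reW S (fun j => <<Wmx j>>%MS)).
Qed.

Lemma gstep z S T : \rank (Mst z S T) = \rank (Mst z S (shS T)).
Proof.
rewrite -rankg gmxE.
have E : (Mst z S T *m Pg :=: (\sum_(j in S) <<Wmx j>> + \sum_(i in T) <<Zmx z (ordS i)>>))%MS.
  apply: eqmx_trans (addsmxMr _ _ _) _; apply: adds_eqmx.
    apply: eqmx_trans (sumsmxMr _ _ _) _; apply: eqmx_sums => j _.
    apply: eqmx_trans (eqmxMr _ (genmxE _)) _; rewrite -gmxE.
    apply: eqmx_trans (gWeq _) _; exact: eqmx_sym (genmxE _).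
  apply: eqmx_trans (sumsmxMr _ _ _) _; apply: eqmx_sums => j _.
  apply: eqmx_trans (eqmxMr _ (genmxE _)) _; rewrite -gmxE gZ.
  exact: eqmx_sym (genmxE _).
by rewrite E (reW T (fun j => <<Zmx z j>>%MS)).
Qed.

Definition o0 : 'I_3 := @Ordinal 3 0 isT.
Definition o1 : 'I_3 := @Ordinal 3 1 isT.
Definition o2 : 'I_3 := @Ordinal 3 2 isT.

Lemma ordE3 (x : 'I_3) : x = o0 \/ x = o1 \/ x = o2.
Proof.
case: x => [[|[|[|n]]] h]; [left|right;left|right;right|by []]; exact: val_inj.
Qed.

Lemma card3 (S : {set 'I_3}) : #|S| = ((o0 \in S) + (o1 \in S) + (o2 \in S))%N.
Proof.
rewrite -sum1_card big_mkcond !big_ord_recl big_ord0 /=.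
have -> : (@lift 3 ord0 (@lift 2 ord0 ord0)) = o2 by apply: val_inj.
have -> : (@lift 3 ord0 ord0) = o1 by apply: val_inj.
have -> : (ord0 : 'I_3) = o0 by apply: val_inj.
by case: (o0 \in S); case: (o1 \in S); case: (o2 \in S).
Qed.

Lemma boolc (a0 a1 a2 b0 b1 b2 : bool) :
  (a0 + a1 + a2 == b0 + b1 + b2)%N ==>
  [|| [&& b0 == a0, b1 == a1 & b2 == a2], [&& b0 == a2, b1 == a0 & b2 == a1]
    | [&& b0 == a1, b1 == a2 & b2 == a0]].
Proof. by case: a0; case: a1; case: a2; case: b0; case: b1; case: b2. Qed.

Lemma key (S S' : {set 'I_3}) : #|S| = #|S'| -> S' = S \/ S' = shS S \/ S' = shS (shS S).
Proof.
rewrite !card3 => /eqP H.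
have p0 : ord_pred o0 = o2 by apply: val_inj.
have p1 : ord_pred o1 = o0 by apply: val_inj.
have p2 : ord_pred o2 = o1 by apply: val_inj.
move: (boolc (o0 \in S) (o1 \in S) (o2 \in S) (o0 \in S') (o1 \in S') (o2 \in S')).
rewrite H /= => /or3P[] /and3P[/eqP e0 /eqP e1 /eqP e2]; [left|right;left|right;right];
  apply/setP => x; case: (ordE3 x) => [->|[->|->]]; rewrite ?inE ?p0 ?p1 ?p2 ?p0 ?p1 //.
Qed.

Theorem proposition1 (z : 'M['F_2]_(2, 30)) (S S' T T' : {set 'I_3}) :
  #|S| = #|S'| -> #|T| = #|T'| -> \rank (Mst z S T) = \rank (Mst z S' T').
Proof.
move=> /key HS /key HT.
have -> : \rank (Mst z S T) = \rank (Mst z S' T).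
  by case: HS => [->|[->|->]]; rewrite -?fstep.
by case: HT => [->|[->|->]]; rewrite -?gstep.
Qed.
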